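(* For $\tau,t\in\mathbb{R}$ and integer $n\ge0$ let $$\mu_{2n}(\tau,t)=\int_{-\infty}^{\infty}x^{2n}\exp(-x^6+\tau x^4+tx^2)\,dx.$$ Then $$\frac{\partial^2\mu_{2n}}{\partial\tau\,\partial t}-\tfrac23\tau\frac{\partial\mu_{2n}}{\partial\tau}-\tfrac13t\frac{\partial\mu_{2n}}{\partial t}-\tfrac16(2n+1)\mu_{2n}=0.$$ *)

(* Defs.v *)
From Stdlib Require Import Reals.
From Coquelicot Require Import Coquelicot.
Open Scope R_scope.

Definition integrand (n : nat) (tau t x : R) : R :=
  x ^ (2 * n) * exp (- x ^ 6 + tau * x ^ 4 + t * x ^ 2).

Definition mu (n : nat) (tau t : R) : R :=
  RInt_gen (integrand n tau t)
    (Rbar_locally m_infty) (Rbar_locally p_infty).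

Definition d_tau (f : R -> R -> R) (tau t : R) : R :=
  Derive (fun s => f s t) tau.
Definition d_t (f : R -> R -> R) (tau t : R) : R :=
  Derive (fun s => f tau s) t.

(* Main.v *)
Require Import Defs.
From Stdlib Require Import Reals Lra Lia Psatz Classical.
From Coquelicot Require Import Coquelicot.
Open Scope R_scope.

Lemma exp_le_mono x y : x <= y -> exp x <= exp y.
Proof. intros [H|H]. left; apply exp_increasing; auto. subst; lra. Qed.

Lemma exp_taylor_bound y : Rabs (exp y - 1 - y) <= y^2 * exp (Rabs y).
Proof.
  pose proof (exp_ineq1_le y) as H1.
  pose proof (exp_ineq1_le (-y)) as H2.
  pose proof (exp_pos y) as Hp.
  assert (He : exp (-y) * exp y = 1) by (rewrite <- exp_plus; replace (-y+y) with 0 by ring; apply exp_0).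
  rewrite Rabs_pos_eq by lra.
  destruct (Rle_dec 0 y) as [Hy|Hy].
  - rewrite Rabs_pos_eq by lra.
    assert (A : exp y - 1 <= y * exp y) by nra.
    nra.
  - rewrite Rabs_left by lra.
    assert (B : exp y * (1 - y) <= 1) by nra.
    assert (C : 1 <= exp (-y)) by (pose proof (exp_ineq1_le (-y)); lra).
    assert (D : exp y - 1 - y <= y^2) .
    { assert (0 < 1 - y) by lra.
      assert ((exp y - 1 - y) * (1 - y) <= y^2) by nra.
      nra. }
    nra.
Qed.

Lemma integrand_nonneg n tau t x : 0 <= integrand n tau t x.
Proof.
  unfold integrand. apply Rmult_le_pos; [|left; apply exp_pos].
  rewrite pow_mult. apply pow_le. nra.
Qed.

Lemma integrand_S n tau t x : integrand (S n) tau t x = x^2 * integrand n tau t x.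
Proof.
  unfold integrand. replace (2 * S n)%nat with (2 + 2*n)%nat by lia.
  rewrite pow_add. ring.
Qed.

Lemma integrand_t n tau t h x :
  integrand n tau (t + h) x = integrand n tau t x * exp (h * x^2).
Proof.
  unfold integrand. rewrite Rmult_assoc, <- exp_plus. f_equal. f_equal. ring.
Qed.

Lemma integrand_tau n tau t h x :
  integrand n (tau + h) t x = integrand n tau t x * exp (h * x^4).
Proof.
  unfold integrand. rewrite Rmult_assoc, <- exp_plus. f_equal. f_equal. ring.
Qed.

Lemma integrand_cont n tau t x : continuous (integrand n tau t) x.
Proof.
  apply (@ex_derive_continuous R_AbsRing R_NormedModule). unfold integrand. auto_derive. auto.
Qed.

Lemma poly_bound a b : exists K, forall u, 0 <= u -> -u^6 + a*u^4 + b*u^2 + u <= K.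
Proof.
  remember (Rabs a + Rabs b + 1) as AA eqn:HAA. remember (1 + AA) as BB eqn:HBB.
  assert (HA : 1 <= AA) by (pose proof (Rabs_pos a); pose proof (Rabs_pos b); lra).
  assert (HB : 2 <= BB) by lra.
  exists (AA * BB^4). intros u Hu.
  assert (Ha : a * u^4 <= Rabs a * u^4).
  { apply Rmult_le_compat_r. apply pow_le; lra. apply Rle_abs. }
  assert (Hb : b * u^2 <= Rabs b * u^2).
  { apply Rmult_le_compat_r. apply pow_le; lra. apply Rle_abs. }
  pose proof (Rabs_pos a). pose proof (Rabs_pos b).
  assert (HB4 : BB <= BB^4).
  { assert (1 <= BB^3) by (apply pow_R1_Rle; lra). simpl in *. nra. }
  assert (HB2 : BB^2 <= BB^4).
  { assert (1 <= BB^2) by (apply pow_R1_Rle; lra). simpl in *. nra. }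
  assert (KP : 0 <= AA * BB^4) by (apply Rmult_le_pos; [lra| apply pow_le; lra]).
  destruct (Rle_dec BB u) as [HuB|HuB].
  - assert (Hu1 : 1 <= u) by lra.
    assert (U2 : u^2 <= u^4) by (assert (1 <= u^2) by (apply pow_R1_Rle; lra); simpl in *; nra).
    assert (U1 : u <= u^4) by (assert (1 <= u^3) by (apply pow_R1_Rle; lra); simpl in *; nra).
    assert (Hs : a*u^4 + b*u^2 + u <= AA * u^4).
    { assert (Rabs b * u^2 <= Rabs b * u^4) by (apply Rmult_le_compat_l; lra). nra. }
    assert (Hsq : AA <= u^2).
    { assert (u <= u*u) by nra. simpl. lra. }
    assert (u^6 = u^4 * u^2) by ring.
    assert (0 <= u^4) by (apply pow_le; lra).
    nra.
  - assert (Hub : u <= BB) by lra.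
    assert (P4 : u^4 <= BB^4) by (apply pow_incr; lra).
    assert (P2 : u^2 <= BB^2) by (apply pow_incr; lra).
    assert (0 <= u^6) by (apply pow_le; lra).
    assert (Rabs a * u^4 <= Rabs a * BB^4) by (apply Rmult_le_compat_l; lra).
    assert (Rabs b * u^2 <= Rabs b * BB^4) by (apply Rmult_le_compat_l; lra).
    nra.
Qed.

Lemma exp_pow a n : exp a ^ n = exp (INR n * a).
Proof.
  induction n. simpl. rewrite Rmult_0_l, exp_0; auto.
  rewrite S_INR. simpl. rewrite IHn, <- exp_plus. f_equal. ring.
Qed.

Lemma integrand_bound n tau t : exists C, 0 < C /\ forall x, integrand n tau t x <= C * exp (- Rabs x).
Proof.
  destruct (poly_bound tau (t + INR n)) as [K HK].
  exists (exp K). split. apply exp_pos. intros x.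
  unfold integrand.
  assert (H1 : x^(2*n) <= exp (INR n * x^2)).
  { rewrite pow_mult, <- exp_pow. apply pow_incr. split. nra.
    pose proof (exp_ineq1_le (x^2)). lra. }
  rewrite <- exp_plus.
  apply Rle_trans with (exp (INR n * x^2) * exp (- x ^ 6 + tau * x ^ 4 + t * x ^ 2)).
  apply Rmult_le_compat_r. left; apply exp_pos. auto.
  rewrite <- exp_plus. apply exp_le_mono.
  pose proof (HK (Rabs x) (Rabs_pos x)).
  assert (E2 : Rabs x ^2 = x^2) by apply pow2_abs.
  assert (E4 : Rabs x ^4 = x^4) by (replace 4%nat with (2*2)%nat by lia; rewrite !pow_mult, E2; auto).
  assert (E6 : Rabs x ^6 = x^6) by (replace 6%nat with (2*3)%nat by lia; rewrite !pow_mult, E2; auto).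
  rewrite E2, E4, E6 in H. lra.
Qed.

Lemma ball_R x y e : Rabs (y - x) < e -> ball x e y.
Proof. intros. unfold ball; simpl. unfold AbsRing_ball. simpl. unfold abs, minus, plus, opp; simpl. auto. Qed.

Lemma mono_lim (F : R -> R) C :
  (forall a b, 0 <= a -> a <= b -> F a <= F b) -> (forall b, 0 <= b -> F b <= C) ->
  exists L, forall eps, 0 < eps -> exists M, forall b, M < b -> Rabs (F b - L) < eps.
Proof.
  intros HF HC.
  set (E := fun y => exists b, 0 <= b /\ y = F b).
  destruct (completeness E) as [L [Hub Hlub]].
  - exists C. intros y [b [Hb ->]]. auto.
  - exists (F 0). exists 0. split; [lra|auto].
  - exists L. intros eps He.
    destruct (classic (exists b0, 0 <= b0 /\ L - eps < F b0)) as [[b0 [Hb0 Hlt]] | Hno].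
    + exists b0. intros b Hb. assert (F b0 <= F b) by (apply HF; lra).
      assert (F b <= L) by (apply Hub; exists b; split; [lra|auto]).
      apply Rabs_def1; lra.
    + exfalso. assert (L <= L - eps).
      { apply Hlub. intros y [b [Hb ->]]. destruct (Rle_dec (F b) (L - eps)); auto.
        exfalso; apply Hno; exists b; split; lra. }
      lra.
Qed.

Lemma chasles_R (f : R -> R) a b c : (forall x, continuous f x) -> RInt f a c = RInt f a b + RInt f b c.
Proof.
  intros Hc. assert (E : forall u v, ex_RInt f u v) by (intros; apply (ex_RInt_continuous (V:=R_CompleteNormedModule)); intros; apply Hc).
  rewrite <- (RInt_Chasles f a b c) by auto. reflexivity.
Qed.

Lemma RInt_exp_neg C b : RInt (fun x => C * exp (- x)) 0 b = C - C * exp (- b).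
Proof.
  assert (H : is_RInt (fun x => C * exp (- x)) 0 b (minus ((fun x => - C * exp (-x)) b) ((fun x => - C * exp (-x)) 0))).
  { apply (is_RInt_derive (V:=R_CompleteNormedModule) (fun x => - C * exp (-x))).
    - intros x _. auto_derive; auto. ring.
    - intros x _. apply (@ex_derive_continuous R_AbsRing R_NormedModule). auto_derive. auto. }
  apply (is_RInt_unique (V:=R_CompleteNormedModule)) in H. rewrite H. unfold minus, plus, opp; simpl. rewrite Ropp_0, exp_0. ring.
Qed.

Lemma RInt_exp_pos C b : RInt (fun x => C * exp x) (- b) 0 = C - C * exp (- b).
Proof.
  assert (H : is_RInt (fun x => C * exp x) (-b) 0 (minus ((fun x => C * exp x) 0) ((fun x => C * exp x) (-b)))).
  { apply (is_RInt_derive (V:=R_CompleteNormedModule) (fun x => C * exp x)).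
    - intros x _. auto_derive; auto. ring.
    - intros x _. apply (@ex_derive_continuous R_AbsRing R_NormedModule). auto_derive. auto. }
  apply (is_RInt_unique (V:=R_CompleteNormedModule)) in H. rewrite H. unfold minus, plus, opp; simpl. rewrite exp_0. ring.
Qed.

Lemma ex_gen (f : R -> R) C : (forall x, continuous f x) -> (forall x, 0 <= f x <= C * exp (- Rabs x)) ->
  exists L, is_RInt_gen f (Rbar_locally m_infty) (Rbar_locally p_infty) L.
Proof.
  intros Hc Hb.
  assert (E : forall u v, ex_RInt f u v) by (intros; apply (ex_RInt_continuous (V:=R_CompleteNormedModule)); intros; apply Hc).
  assert (Hpos : forall u v, u <= v -> 0 <= RInt f u v).
  { intros u v Huv. apply RInt_ge_0; auto. intros; apply Hb. }
  destruct (mono_lim (fun b => RInt f 0 b) C) as [L1 H1].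
  - intros a b Ha Hab. simpl. rewrite (chasles_R f 0 a b Hc). pose proof (Hpos a b Hab). lra.
  - intros b Hb0. simpl. apply Rle_trans with (RInt (fun x => C * exp (- x)) 0 b).
    + apply RInt_le; auto. apply (ex_RInt_continuous (V:=R_CompleteNormedModule)). intros.
      apply (@ex_derive_continuous R_AbsRing R_NormedModule). auto_derive. auto.
      intros x Hx. rewrite <- (Rabs_pos_eq x) at 2 by lra. apply Hb.
    + rewrite RInt_exp_neg. pose proof (exp_pos (-b)). 
      assert (0 <= C). { pose proof (Hb 0). pose proof (exp_pos (- Rabs 0)). nra. }
      nra.
  - destruct (mono_lim (fun b => RInt f (- b) 0) C) as [L2 H2].
    + intros a b Ha Hab. simpl. rewrite (chasles_R f (-b) (-a) 0 Hc). pose proof (Hpos (-b) (-a)). lra.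
    + intros b Hb0. simpl. apply Rle_trans with (RInt (fun x => C * exp x) (- b) 0).
      * apply RInt_le; auto. lra. apply (ex_RInt_continuous (V:=R_CompleteNormedModule)). intros.
        apply (@ex_derive_continuous R_AbsRing R_NormedModule). auto_derive. auto.
        intros x Hx. replace x with (- Rabs x) at 2 by (rewrite Rabs_left by lra; ring). apply Hb.
      * rewrite RInt_exp_pos. pose proof (exp_pos (-b)).
        assert (0 <= C). { pose proof (Hb 0). pose proof (exp_pos (- Rabs 0)). nra. }
        nra.
    + exists (L2 + L1). intros P [eps Heps].
      destruct (H1 (eps/2)) as [M1 HM1]. destruct eps; simpl; lra.
      destruct (H2 (eps/2)) as [M2 HM2]. destruct eps; simpl; lra.
      apply Filter_prod with (fun a => a < - Rabs M2 - 1) (fun b => Rabs M1 + 1 < b).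
      * exists (- Rabs M2 - 1). auto.
      * exists (Rabs M1 + 1). auto.
      * intros a b Ha Hb'. simpl. exists (RInt f a b). split.
        apply (RInt_correct (V:=R_CompleteNormedModule)); auto.
        apply Heps. apply ball_R.
        rewrite (chasles_R f a 0 b Hc).
        assert (A1 : M1 < b) by (pose proof (Rle_abs M1); lra).
        assert (A2 : M2 < - a) by (pose proof (Rle_abs M2); lra).
        specialize (HM1 b A1). specialize (HM2 (-a) A2). simpl in HM1, HM2.
        rewrite Ropp_involutive in HM2.
        apply Rabs_def2 in HM1. apply Rabs_def2 in HM2. apply Rabs_def1; lra.
Qed.

Lemma is_mu n tau t : is_RInt_gen (integrand n tau t) (Rbar_locally m_infty) (Rbar_locally p_infty) (mu n tau t).
Proof.
  destruct (integrand_bound n tau t) as [C [HC HB]].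
  destruct (ex_gen (integrand n tau t) C) as [L HL].
  - intros; apply integrand_cont.
  - intros x; split; [apply integrand_nonneg | apply HB].
  - unfold mu. rewrite (is_RInt_gen_unique _ L HL). exact HL.
Qed.

Lemma deriv_gen (g : R -> R -> R) (dg Bf : R -> R) s0 Ld LB :
  (forall s, is_RInt_gen (g s) (Rbar_locally m_infty) (Rbar_locally p_infty)
                (RInt_gen (g s) (Rbar_locally m_infty) (Rbar_locally p_infty))) ->
  is_RInt_gen dg (Rbar_locally m_infty) (Rbar_locally p_infty) Ld ->
  is_RInt_gen Bf (Rbar_locally m_infty) (Rbar_locally p_infty) LB ->
  (forall h x, Rabs h <= 1 -> Rabs (g (s0 + h) x - g s0 x - h * dg x) <= h^2 * Bf x) ->
  is_derive (fun s => RInt_gen (g s) (Rbar_locally m_infty) (Rbar_locally p_infty)) s0 Ld.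
Proof.
  intros Hg Hd HBf Hbnd.
  apply is_derive_Reals. intros eps Heps.
  assert (Hdp : 0 < Rmin 1 (eps / (Rabs LB + 1))).
  { apply Rmin_pos. lra. apply Rdiv_lt_0_compat; auto. pose proof (Rabs_pos LB); lra. }
  exists (mkposreal _ Hdp). simpl. intros h Hh0 Hhd.
  set (F := fun s => RInt_gen (g s) (Rbar_locally m_infty) (Rbar_locally p_infty)).
  assert (HD : is_RInt_gen (fun x => g (s0+h) x - g s0 x - h * dg x) (Rbar_locally m_infty) (Rbar_locally p_infty)
                 (F (s0+h) - F s0 - h * Ld)).
  { pose proof (is_RInt_gen_minus _ _ _ _ (Hg (s0+h)) (Hg s0)) as H1.
    pose proof (is_RInt_gen_scal _ h _ Hd) as H2.
    pose proof (is_RInt_gen_minus _ _ _ _ H1 H2) as H3.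
    exact H3. }
  assert (HB2 : is_RInt_gen (fun x => h^2 * Bf x) (Rbar_locally m_infty) (Rbar_locally p_infty) (h^2 * LB)).
  { exact (is_RInt_gen_scal _ (h^2) _ HBf). }
  assert (Hn : Rabs (F (s0+h) - F s0 - h * Ld) <= h^2 * LB).
  { refine (RInt_gen_norm _ _ _ _ _ _ HD HB2).
    - apply Filter_prod with (fun a => a < 0) (fun b => 0 < b).
      exists 0; auto. exists 0; auto. simpl; intros; lra.
    - apply filter_forall. intros [a b] x _. apply Hbnd. 
      pose proof (Rmin_l 1 (eps / (Rabs LB + 1))). lra. }
  fold (F (s0 + h)). fold (F s0).
  assert (Hh : 0 < Rabs h) by (apply Rabs_pos_lt; auto).
  replace ((F (s0 + h) - F s0) / h - Ld) with ((F (s0+h) - F s0 - h * Ld) / h) by (field; auto).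
  rewrite Rabs_div by auto.
  apply (Rmult_lt_reg_r (Rabs h)); auto.
  unfold Rdiv. rewrite Rmult_assoc, Rinv_l, Rmult_1_r by lra.
  assert (h^2 = Rabs h * Rabs h) by (rewrite <- Rabs_mult; simpl; rewrite Rmult_1_r; rewrite Rabs_pos_eq; nra).
  pose proof (Rle_abs LB).
  pose proof (Rmin_r 1 (eps / (Rabs LB + 1))).
  assert (Rabs h * (Rabs LB + 1) < eps).
  { assert (Rabs h < eps / (Rabs LB + 1)) by lra.
    apply (Rmult_lt_compat_r (Rabs LB + 1)) in H2. 2: pose proof (Rabs_pos LB); lra.
    unfold Rdiv in H2. rewrite Rmult_assoc, Rinv_l, Rmult_1_r in H2 by (pose proof (Rabs_pos LB); lra). auto. }
  assert (h^2 * LB <= Rabs h * Rabs h * (Rabs LB + 1)) by (rewrite H; nra).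
  nra.
Qed.

Lemma taylor_gen I y z : 0 <= I -> Rabs y <= z ->
  Rabs (I * exp y - I - y * I) <= I * (y^2 * exp z).
Proof.
  intros HI Hy.
  replace (I * exp y - I - y * I) with (I * (exp y - 1 - y)) by ring.
  rewrite Rabs_mult, (Rabs_pos_eq I) by auto.
  apply Rmult_le_compat_l; auto.
  apply Rle_trans with (y^2 * exp (Rabs y)). apply exp_taylor_bound.
  apply Rmult_le_compat_l. apply pow2_ge_0. apply exp_le_mono; auto.
Qed.

Lemma bound_t n tau t h x : Rabs h <= 1 ->
  Rabs (integrand n tau (t + h) x - integrand n tau t x - h * integrand (S n) tau t x)
  <= h^2 * integrand (S (S n)) tau (t + 1) x.
Proof.
  intros Hh. rewrite !integrand_S, !integrand_t.
  pose proof (integrand_nonneg n tau t x) as HI.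
  set (I := integrand n tau t x).
  replace (I * exp (h * x^2) - I - h * (x^2 * I)) with (I * exp (h * x^2) - I - (h * x^2) * I) by ring.
  eapply Rle_trans. apply (taylor_gen I (h * x^2) (x^2)); auto.
  rewrite Rabs_mult, (Rabs_pos_eq (x^2)) by apply pow2_ge_0.
  assert (0 <= x^2) by apply pow2_ge_0. nra.
  rewrite Rmult_1_l. right. ring.
Qed.

Lemma bound_tau n tau t h x : Rabs h <= 1 ->
  Rabs (integrand n (tau + h) t x - integrand n tau t x - h * integrand (S (S n)) tau t x)
  <= h^2 * integrand (S (S (S (S n)))) (tau + 1) t x.
Proof.
  intros Hh. rewrite !integrand_S, !integrand_tau.
  pose proof (integrand_nonneg n tau t x) as HI.
  set (I := integrand n tau t x).
  replace (I * exp (h * x^4) - I - h * (x^2 * (x^2 * I))) with (I * exp (h * x^4) - I - (h * x^4) * I) by ring.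
  eapply Rle_trans. apply (taylor_gen I (h * x^4) (x^4)); auto.
  assert (0 <= x^4) by (replace 4%nat with (2*2)%nat by lia; rewrite pow_mult; apply pow2_ge_0).
  rewrite Rabs_mult, (Rabs_pos_eq (x^4)) by auto. nra.
  rewrite Rmult_1_l. right. ring.
Qed.

Lemma deriv_t n tau t : is_derive (fun s => mu n tau s) t (mu (S n) tau t).
Proof.
  apply (deriv_gen (fun s => integrand n tau s) (integrand (S n) tau t)
           (integrand (S (S n)) tau (t + 1)) t (mu (S n) tau t) (mu (S (S n)) tau (t+1))).
  - intros s. apply is_mu.
  - apply is_mu.
  - apply is_mu.
  - intros; apply bound_t; auto.
Qed.

Lemma deriv_tau n tau t : is_derive (fun s => mu n s t) tau (mu (S (S n)) tau t).
Proof.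
  apply (deriv_gen (fun s => integrand n s t) (integrand (S (S n)) tau t)
           (integrand (S (S (S (S n)))) (tau + 1) t) tau (mu (S (S n)) tau t) (mu (S (S (S (S n)))) (tau + 1) t)).
  - intros s. apply is_mu.
  - apply is_mu.
  - apply is_mu.
  - intros; apply bound_tau; auto.
Qed.

Lemma deriv_F n tau t x :
  is_derive (fun x => x * integrand n tau t x) x
   ((2*INR n+1) * integrand n tau t x - 6 * integrand (S(S(S n))) tau t x
    + 4*tau*integrand (S(S n)) tau t x + 2*t*integrand (S n) tau t x).
Proof.
  rewrite !integrand_S. unfold integrand. auto_derive; auto.
  simpl. set (E := exp _).
  replace (INR (n + (n + 0))) with (2 * INR n) by (change (n + (n+0))%nat with (2*n)%nat; rewrite mult_INR; simpl; ring).
  destruct n as [|m]. simpl; ring. generalize (INR (S m)); intros r. simpl. ring.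
Qed.

Lemma exp_neg_abs_bound x : exp (- Rabs x) * (1 + Rabs x) <= 1.
Proof.
  pose proof (exp_ineq1_le (Rabs x)).
  assert (He : exp (- Rabs x) * exp (Rabs x) = 1) by (rewrite <- exp_plus; replace (- Rabs x + Rabs x) with 0 by ring; apply exp_0).
  pose proof (exp_pos (- Rabs x)). nra.
Qed.

Lemma F_bound n tau t : exists K, 0 <= K /\ forall x, Rabs (x * integrand n tau t x) * (1 + Rabs x) <= K.
Proof.
  destruct (integrand_bound n tau t) as [C1 [HC1 H1]].
  destruct (integrand_bound (S n) tau t) as [C2 [HC2 H2]].
  exists (C1 + C2). split. lra. intros x.
  pose proof (exp_neg_abs_bound x) as Hb.
  pose proof (integrand_nonneg n tau t x) as HI.
  rewrite Rabs_mult, (Rabs_pos_eq (integrand n tau t x)) by auto.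
  assert (Hx : Rabs x <= 1 + x^2) by (rewrite <- pow2_abs; pose proof (Rabs_pos x); nra).
  assert (Hs : Rabs x * integrand n tau t x <= integrand n tau t x + integrand (S n) tau t x).
  { rewrite integrand_S. nra. }
  specialize (H1 x). specialize (H2 x).
  pose proof (exp_pos (- Rabs x)). pose proof (Rabs_pos x).
  apply Rle_trans with ((C1 + C2) * exp (- Rabs x) * (1 + Rabs x)).
  apply Rmult_le_compat_r. lra. lra.
  rewrite Rmult_assoc. nra.
Qed.

Lemma F_lim n tau t :
  filterlim (fun x => x * integrand n tau t x) (Rbar_locally p_infty) (locally 0) /\
  filterlim (fun x => x * integrand n tau t x) (Rbar_locally m_infty) (locally 0).
Proof.
  destruct (F_bound n tau t) as [K [HK HF]].
  assert (Key : forall (eps : posreal) x, K / eps < Rabs x -> ball 0 eps (x * integrand n tau t x)).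
  { intros [eps Heps] x Hx. simpl in *. apply ball_R. rewrite Rminus_0_r.
    specialize (HF x). pose proof (Rabs_pos (x * integrand n tau t x)).
    assert (K < eps * Rabs x).
    { apply (Rmult_lt_compat_l eps) in Hx; auto. unfold Rdiv in Hx.
      rewrite <- Rmult_assoc, (Rmult_comm eps K), Rmult_assoc, Rinv_r, Rmult_1_r in Hx by lra. auto. }
    nra. }
  split; apply filterlim_locally; intros eps.
  - exists (K / eps). intros x Hx. apply Key. pose proof (Rle_abs x).
    set (q := K / eps) in *. clearbody q. lra.
  - exists (- (K / eps)). intros x Hx. apply Key.
    assert (Hq : 0 <= K / eps) by (apply Rmult_le_pos; [lra| left; apply Rinv_0_lt_compat, cond_pos]).
    set (q := K / eps) in *. clearbody q. rewrite Rabs_left1; lra.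
Qed.

Lemma ibp n tau t :
  (2*INR n+1) * mu n tau t - 6 * mu (S(S(S n))) tau t + 4*tau*mu (S(S n)) tau t + 2*t*mu (S n) tau t = 0.
Proof.
  set (Fp := fun x => x * integrand n tau t x).
  set (G := fun x => (2*INR n+1) * integrand n tau t x - 6 * integrand (S(S(S n))) tau t x
    + 4*tau*integrand (S(S n)) tau t x + 2*t*integrand (S n) tau t x).
  assert (HD : forall x, Derive Fp x = G x) by (intros; apply is_derive_unique; apply deriv_F).
  assert (HG : is_RInt_gen G (Rbar_locally m_infty) (Rbar_locally p_infty) (0 - 0)).
  { apply (is_RInt_gen_ext (Derive Fp)).
    - apply filter_forall. intros; auto.
    - destruct (F_lim n tau t) as [Lp Lm].
      apply is_RInt_gen_Derive; auto.
      + apply filter_forall. intros. eexists. apply deriv_F.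
      + apply filter_forall. intros ab x _. apply (continuous_ext G). intros; symmetry; auto.
        apply (@ex_derive_continuous R_AbsRing R_NormedModule). unfold G, integrand. auto_derive. auto. }
  assert (HV : is_RInt_gen G (Rbar_locally m_infty) (Rbar_locally p_infty)
     ((2*INR n+1) * mu n tau t - 6 * mu (S(S(S n))) tau t + 4*tau*mu (S(S n)) tau t + 2*t*mu (S n) tau t)).
  { pose proof (is_RInt_gen_scal _ (2*INR n+1) _ (is_mu n tau t)) as H0.
    pose proof (is_RInt_gen_scal _ 6 _ (is_mu (S(S(S n))) tau t)) as H3.
    pose proof (is_RInt_gen_scal _ (4*tau) _ (is_mu (S(S n)) tau t)) as H2.
    pose proof (is_RInt_gen_scal _ (2*t) _ (is_mu (S n) tau t)) as H1.
    pose proof (is_RInt_gen_minus _ _ _ _ H0 H3) as A1.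
    pose proof (is_RInt_gen_plus _ _ _ _ A1 H2) as A2.
    pose proof (is_RInt_gen_plus _ _ _ _ A2 H1) as A3.
    exact A3. }
  apply (is_RInt_gen_unique (V:=R_CompleteNormedModule)) in HG. apply (is_RInt_gen_unique (V:=R_CompleteNormedModule)) in HV. rewrite <- HV, HG. ring.
Qed.

Theorem lemma5p6 (n : nat) (tau t : R) :
  ex_RInt_gen (integrand n tau t) (Rbar_locally m_infty) (Rbar_locally p_infty) /\
  ex_derive (fun s => mu n s t) tau /\
  ex_derive (fun s => mu n tau s) t /\
  ex_derive (fun s => d_t (mu n) s t) tau /\
  d_tau (d_t (mu n)) tau t
    - 2 / 3 * tau * d_tau (mu n) tau t
    - 1 / 3 * t * d_t (mu n) tau t
    - 1 / 6 * (2 * INR n + 1) * mu n tau t = 0.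
Proof.
  assert (Hdt : forall s u, d_t (mu n) s u = mu (S n) s u).
  { intros s u. unfold d_t. apply is_derive_unique. apply deriv_t. }
  assert (Hd2 : is_derive (fun s => d_t (mu n) s t) tau (mu (S (S (S n))) tau t)).
  { apply (is_derive_ext (fun s => mu (S n) s t)). intros; symmetry; apply Hdt. apply deriv_tau. }
  split; [|split; [|split; [|split]]].
  - exists (mu n tau t). apply is_mu.
  - eexists. apply deriv_tau.
  - eexists. apply deriv_t.
  - eexists. apply Hd2.
  - assert (E1 : d_tau (d_t (mu n)) tau t = mu (S(S(S n))) tau t) by (unfold d_tau; apply is_derive_unique; exact Hd2).
    assert (E2 : d_tau (mu n) tau t = mu (S(S n)) tau t) by (unfold d_tau; apply is_derive_unique; apply deriv_tau).
    rewrite E1, E2, Hdt.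
    pose proof (ibp n tau t) as H.
    replace (mu (S (S (S n))) tau t - 2 / 3 * tau * mu (S (S n)) tau t - 1 / 3 * t * mu (S n) tau t -
      1 / 6 * (2 * INR n + 1) * mu n tau t)
    with (-(1/6) * ((2*INR n+1) * mu n tau t - 6 * mu (S(S(S n))) tau t + 4*tau*mu (S(S n)) tau t + 2*t*mu (S n) tau t)) by field.
    rewrite H. ring.
Qed.
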